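(* Let $K$ be a field of characteristic $p>0$, let $a\in K^{{\mathbb N}}$ be a simple nondegenerate $K$-recurrence sequence, let $q$ be a power of $p$, and let $r,s\in{\mathbb Q}$. If $\{r+sq^n\mid n\ge m\}\subseteq{\mathcal Z}(a)$ for some $m\in{\mathbb N}$, then $\{r+sq^n\mid n\in{\mathbb N}\}\cap{\mathbb N}\subseteq{\mathcal Z}(a)$.
   Context: ${\mathbb N}=\{0,1,2,\dots\}$, ${\mathcal Z}(a)=\{n\in{\mathbb N}\mid a(n)=0\}$. The minimum polynomial $P_a$ is the monic generator of $\{P\in K[E]\mid P(E)a=0\}$, $(Ea)(n)=a(n+1)$. $a$ is simple if $P_a$ has distinct roots and nondegenerate if its roots are nonzero and no quotient of two distinct roots is a root of unity. *)

(* Defs.v *)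
From HB Require Import structures.
From mathcomp Require Import all_boot all_order all_algebra.
Set Implicit Arguments. Unset Strict Implicit. Unset Printing Implicit Defensive.
Import Order.TTheory GRing.Theory Num.Theory.
Local Open Scope ring_scope.

(* (P(E) a)(n) = \sum_i P_i a(n+i), where (E a)(n) = a(n+1). *)
Definition shift_apply (K : fieldType) (P : {poly K}) (a : nat -> K) (n : nat) : K :=
  \sum_(i < size P) P`_i * a (n + i)%N.

Definition annihilates (K : fieldType) (P : {poly K}) (a : nat -> K) : Prop :=
  forall n, shift_apply P a n = 0.

Definition is_min_poly (K : fieldType) (a : nat -> K) (P : {poly K}) : Prop :=
  [/\ P \is monic, annihilates P a & forall Q, annihilates Q a -> P %| Q].

Definition recurrence_seq (K : fieldType) (a : nat -> K) : Prop :=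
  exists P : {poly K}, P != 0 /\ annihilates P a.

(* Roots of P are taken in arbitrary field extensions (equivalently, in an
   algebraic closure of K). *)
Definition distinct_roots (K : fieldType) (P : {poly K}) : Prop :=
  forall (L : fieldType) (f : {rmorphism K -> L}) (x : L),
    ~~ (('X - x%:P) ^+ 2 %| map_poly f P).

Definition nondegenerate_roots (K : fieldType) (P : {poly K}) : Prop :=
  forall (L : fieldType) (f : {rmorphism K -> L}) (x y : L),
    root (map_poly f P) x -> root (map_poly f P) y ->
    x != 0 /\ (x != y -> forall n : nat, (0 < n)%N -> (x / y) ^+ n != 1).

Definition simple_seq (K : fieldType) (a : nat -> K) : Prop :=
  exists P, is_min_poly a P /\ distinct_roots P.

Definition nondegenerate_seq (K : fieldType) (a : nat -> K) : Prop :=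
  exists P, is_min_poly a P /\ nondegenerate_roots P.

(* Main.v *)
Require Import Defs.
From HB Require Import structures.
From mathcomp Require Import all_boot all_order all_algebra all_field.
From mathcomp Require Import ring lra zify.
From Stdlib Require Import Classical.
Set Implicit Arguments. Unset Strict Implicit. Unset Printing Implicit Defensive.
Import Order.TTheory GRing.Theory Num.Theory.
Local Open Scope ring_scope.
Section Frob.
Variables (R : comNzRingType) (p k : nat) (hp : p \in [pchar R]).
Definition frobk (_ : p \in [pchar R]) (x : R) := x ^+ (p ^ k)%N.
Lemma frobk_nat : [pchar R].-nat (p ^ k)%N.
Proof.
rewrite pnatX; apply/orP; left.
by rewrite pnatE ?(pcharf_prime hp).
Qed.
Lemma frobk_nmod : nmod_morphism (frobk hp).
Proof.
split; rewrite /frobk.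
  have p0 : (p == 0)%N = false by case: (p) (prime_gt0 (pcharf_prime hp)).
  by rewrite expr0n expn_eq0 p0.
move=> x y; exact: exprDn_pchar frobk_nat.
Qed.
Lemma frobk_monoid : monoid_morphism (frobk hp).
Proof. by split; rewrite /frobk ?expr1n // => x y; rewrite exprMn. Qed.
HB.instance Definition _ := GRing.isNmodMorphism.Build R R (frobk hp) frobk_nmod.
HB.instance Definition _ := GRing.isMonoidMorphism.Build R R (frobk hp) frobk_monoid.
End Frob.
Section Core.
Variables (K : fieldType) (f : {rmorphism K -> K}) (d : nat) (D C : 'M[K]_d)
  (w : nat -> 'rV[K]_d) (l : 'cV[K]_d) (m : nat).
Hypotheses (hD : row_free D) (hC : row_free C)
  (hw : forall j, w j.+1 *m D = map_mx f (w j) *m C)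
  (hl : forall j, (m <= j)%N -> w j *m l = 0).

Definition Bm j N : 'M[K]_(N, d) := \matrix_(i < N, k < d) w (j + i)%N 0 k.

Lemma rowB j N (i : 'I_N) : row i (Bm j N) = w (j + i)%N.
Proof. by apply/rowP => k; rewrite !mxE. Qed.

Lemma rankBS j N : \rank (Bm j.+1 N) = \rank (Bm j N).
Proof.
have E : Bm j.+1 N *m D = map_mx f (Bm j N) *m C.
  apply/row_matrixP => i; rewrite !row_mul -map_row !rowB addSn; exact: hw.
by rewrite -(mxrankMfree _ hD) E mxrankMfree // mxrank_map.
Qed.

Lemma rankB0 j N : \rank (Bm j N) = \rank (Bm 0 N).
Proof. by elim: j => // j IH; rewrite rankBS. Qed.

Lemma subBS j N : (Bm j N <= Bm j N.+1)%MS.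
Proof.
apply/row_subP => i; rewrite rowB.
by rewrite -(rowB j (widen_ord (leqnSn N) i)) row_sub.
Qed.

Lemma subBsh j N : (Bm j.+1 N <= Bm j N.+1)%MS.
Proof.
apply/row_subP => i; rewrite rowB addSn -addnS.
by rewrite -(rowB j (@Ordinal N.+1 i.+1 (ltn_ord i))) row_sub.
Qed.

Lemma core : w 0 *m l = 0.
Proof.
have [N /eqP HN|none] := pickP (fun M : 'I_d.+1 => \rank (Bm 0 M) == \rank (Bm 0 M.+1)).
  have eqj j : (Bm j N.+1 <= Bm j N)%MS.
    have := mxrank_leqif_sup (subBS j N).
    by case=> _ <-; rewrite !(rankB0 j) HN.
  have shj j : (Bm j N <= Bm j.+1 N)%MS.
    have s1 : (Bm j.+1 N <= Bm j N)%MS := submx_trans (subBsh j N) (eqj j).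
    have := mxrank_leqif_sup s1.
    by case=> _ <-; rewrite rankBS.
  have sub0 : (Bm 0 N <= Bm m N)%MS.
    elim: m => [|k IH]; first exact: submx_refl.
    exact: submx_trans IH (shj k).
  have w0 : (w 0 <= Bm m N)%MS.
    apply: submx_trans sub0; apply: submx_trans (eqj 0).
    by rewrite -(rowB 0 (@Ordinal N.+1 0 isT)) row_sub.
  have Bl : Bm m N *m l = 0.
    apply/row_matrixP => i; rewrite row_mul rowB row0; apply: hl; exact: leq_addr.
  by case/submxP: w0 => x ->; rewrite -mulmxA Bl mulmx0.
exfalso.
have H M : (M <= d.+1)%N -> (M <= \rank (Bm 0 M))%N.
  elim: M => [|M IH] // lt; have := IH (ltnW lt).
  have := none (Ordinal lt); rewrite /= => ne.
  have := mxrankS (subBS 0 M).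
  rewrite leq_eqVlt ne /= => h1 h2; exact: leq_ltn_trans h2 h1.
have := H d.+1 (leqnn _); rewrite leqNgt ltnS rank_leq_col //.
Qed.
End Core.
Section Lfun.
Variable K : fieldType.
Implicit Types (a : nat -> K) (g h : {poly K}) (c : K) (N : nat).

Definition Lf (a : nat -> K) (h : {poly K}) := \sum_(i < size h) h`_i * a i.

Lemma LfE a h N : (size h <= N)%N -> Lf a h = \sum_(i < N) h`_i * a i.
Proof.
move=> hN; rewrite /Lf (big_ord_widen N (fun i => h`_i * a i) hN) big_mkcond /=.
apply: eq_bigr => i _; case: ltnP => // le; by rewrite nth_default // mul0r.
Qed.

Lemma LfD a g h : Lf a (g + h) = Lf a g + Lf a h.
Proof.
pose N := maxn (size g) (size h).
rewrite !(@LfE _ _ N) ?leq_maxl ?leq_maxr ?size_polyD // -big_split /=.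
by apply: eq_bigr => i _; rewrite coefD mulrDl.
Qed.

Lemma LfZ a c h : Lf a (c *: h) = c * Lf a h.
Proof.
rewrite (@LfE _ _ (size h)) ?size_scale_leq // /Lf mulr_sumr.
by apply: eq_bigr => i _; rewrite coefZ mulrA.
Qed.

Lemma LfX a h : Lf a ('X * h) = Lf (fun i => a i.+1) h.
Proof.
have hs : (size ('X * h)%R <= (size h).+1)%N.
  by apply: leq_trans (size_polyMleq _ _) _; rewrite size_polyX.
rewrite (LfE _ hs) big_ord_recl coefXM /= mul0r add0r.
by apply: eq_bigr => i _; rewrite coefXM.
Qed.

Lemma Lf0 a : Lf a 0 = 0.
Proof. by rewrite /Lf size_poly0 big_ord0. Qed.

Lemma Lf_ann (P : {poly K}) a g : annihilates P a -> Lf a (g * P) = 0.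
Proof.
elim/poly_ind: g a => [|g c IH] a ha; first by rewrite mul0r Lf0.
have -> : (g * 'X + c%:P) * P = 'X * (g * P) + c *: P.
  by rewrite mulrDl mul_polyC -mulrA mulrCA.
rewrite LfD LfZ LfX IH; last first.
  move=> n; apply: etrans (ha n.+1); apply: eq_bigr => i _; by rewrite addSn.
have E : Lf a P = shift_apply P a 0 by apply: eq_bigr => i _; rewrite add0n.
by rewrite E ha mulr0 add0r.
Qed.

Lemma Lf_mod (P : {poly K}) a h : annihilates P a -> Lf a h = Lf a (h %% P).
Proof. by move=> ha; rewrite {1}(divp_eq h P) LfD Lf_ann // add0r. Qed.

Lemma Lf_Xn a e : Lf a 'X^e = a e.
Proof.
rewrite /Lf size_polyXn big_ord_recr /= coefXn eqxx mul1r big1 ?add0r // => i _.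
by rewrite coefXn (ltn_eqF (ltn_ord i)) mul0r.
Qed.

Lemma Lf_mx d a h : (size h <= d)%N -> Lf a h = (poly_rV h *m \col_(i < d) a i) 0 0.
Proof.
move=> hd; rewrite (LfE _ hd) mxE; apply: eq_bigr => i _; by rewrite !mxE.
Qed.

Lemma modpX (P h : {poly K}) n : ((h %% P) ^+ n) %% P = (h ^+ n) %% P.
Proof.
elim: n => [|n IH]; first by rewrite !expr0.
by rewrite !exprS -modp_mul -IH modp_mul mulrC modp_mul mulrC.
Qed.

Lemma rVpolyE d (v : 'rV[K]_d) : rVpoly v = \sum_(i < d) v 0 i *: 'X^i.
Proof.
rewrite /rVpoly poly_def; apply: eq_bigr => i _.
case: insubP => [j _ /val_inj -> // | ]; by rewrite ltn_ord.
Qed.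

End Lfun.
Lemma sqfree_dvd (K : fieldType) (S g : {poly K}) n :
  separable_poly S -> S %| g ^+ n.+1 -> S %| g.
Proof.
move=> sep Sg.
set u := gcdp S g; set v := S %/ u.
have uS : u %| S by rewrite dvdp_gcdl.
have Suv : S = v * u by rewrite divpK.
have cuv : coprimep u v by apply: (separable_coprime sep); rewrite mulrC -Suv.
have cvg : coprimep v g.
  apply/coprimepP => e ev eg; move/coprimepP: cuv; apply => //.
  by rewrite dvdp_gcd eg (dvdp_trans ev) // Suv dvdp_mulr.
have v1 : v %= 1.
  move/coprimepP: (coprimep_expr n.+1 cvg); apply => //.
  by apply: dvdp_trans Sg; rewrite Suv dvdp_mulr.
rewrite Suv -[g]mul1r; apply: dvdp_mul; first by case/andP: v1.
by rewrite dvdp_gcdr.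
Qed.

Section Mats.
Variables (K : fieldType) (P : {poly K}).
Local Notation d := (size P).-1.

Definition Mat (T : {poly K}) (s : nat) : 'M[K]_d :=
  \matrix_(i < d) poly_rV ((T * 'X^(s * i)) %% P).

Lemma mulMat T s (v : 'rV[K]_d) :
  v *m Mat T s = poly_rV ((T * \sum_(i < d) v 0 i *: 'X^(s * i)) %% P).
Proof.
rewrite mulmx_sum_row mulr_sumr (big_morph (fun h => h %% P) (modpD P) (mod0p P)).
rewrite linear_sum; apply: eq_bigr => i _.
by rewrite rowK -scalerAr modpZl linearZ.
Qed.

Lemma frob_poly p k (hp : p \in [pchar K]) (u : {poly K}) : (size u <= d)%N ->
  u ^+ (p ^ k)%N = \sum_(i < d) frobk k hp (u`_i) *: 'X^((p ^ k)%N * i).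
Proof.
move=> hu.
have hpP : p \in [pchar {poly K}] by rewrite pchar_poly.
rewrite -{1}(poly_rV_K hu) rVpolyE.
set S := \sum_(i < d) _.
rewrite -[S ^+ _]/(frobk k hpP S) /S.
rewrite rmorph_sum; apply: eq_bigr => i _.
by rewrite [LHS]/(frobk k hpP _) /frobk exprZn -exprM mulnC mxE.
Qed.

Lemma size_mod_d (h : {poly K}) : P != 0 -> (size (h %% P)%R <= d)%N.
Proof.
move=> P0; have := ltn_modpN0 h P0.
by case: (size P) => // n; rewrite ltnS.
Qed.

Lemma Mat_free p k (hp : p \in [pchar K]) T :
  separable_poly P -> coprimep P T -> row_free (Mat T (p ^ k)%N).
Proof.
move=> sep cPT; have P0 : P != 0 by apply: separable_poly_neq0.
apply: inj_row_free => v; rewrite mulMat.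
set g := \sum_(i < d) _ => h0.
have hmod : (T * g) %% P = 0.
  by rewrite -(poly_rV_K (size_mod_d _ P0)) h0 linear0.
have Pg : P %| g by rewrite -(Gauss_dvdpr _ cPT); apply/modp_eq0P.
have hr : (size (rVpoly v) <= d)%N by apply: size_poly.
have mg : map_poly (frobk k hp) g = (rVpoly v) ^+ (p ^ k)%N.
  rewrite (frob_poly k hp hr) rmorph_sum; apply: eq_bigr => i _.
  by rewrite -!mul_polyC rmorphM /= map_polyC map_polyXn coef_rVpoly_ord.
have sepm : separable_poly (map_poly (frobk k hp) P) by rewrite separable_map.
have : map_poly (frobk k hp) P %| rVpoly v ^+ (p ^ k)%N by rewrite -mg dvdp_map.
have pk : (p ^ k)%N = (p ^ k).-1.+1.
  by rewrite prednK // expn_gt0 (prime_gt0 (pcharf_prime hp)).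
rewrite pk => /(sqfree_dvd sepm) dv.
have r0 : rVpoly v = 0.
  apply/eqP; apply: contraT => nz; have := dvdp_leq nz dv.
  rewrite size_map_poly => h1; have := leq_trans h1 hr.
  have Pp : (0 < size P)%N by rewrite size_poly_gt0.
  by rewrite -{1}(prednK Pp) ltnn.
by rewrite -(rVpolyK v) r0 linear0.
Qed.
End Mats.
Lemma ex_irr_factor (K : fieldType) (g : {poly K}) : (1 < size g)%N ->
  exists Q : {poly K}, monic_irreducible_poly Q /\ Q %| g.
Proof.
move=> g1; suff H : forall n (g : {poly K}), (size g <= n)%N -> (1 < size g)%N ->
  exists Q : {poly K}, monic_irreducible_poly Q /\ Q %| g by exact: H (leqnn _) g1.
clear g g1; elim => [|n IH] g hs g1.
  by move: (leq_trans g1 hs).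
have g0 : g != 0 by rewrite -size_poly_gt0 (ltn_trans _ g1).
case: (classic (forall q : {poly K}, size q != 1%N -> q %| g -> q %= g)) => [irr|].
  have lc : lead_coef g != 0 by rewrite lead_coef_eq0.
  exists ((lead_coef g)^-1 *: g); split; last by rewrite dvdpZl // invr_eq0.
  split; last by rewrite monicE lead_coefZ mulVf.
  split; first by rewrite size_scale ?invr_eq0.
  move=> q q1; rewrite dvdpZr ?invr_eq0 // => qg.
  by apply: eqp_trans (irr q q1 qg) _; rewrite eqp_sym eqp_scale // invr_eq0.
move/not_all_ex_not => [q H]; have [q1 H2] := imply_to_and _ _ H; have [qg nqg] := imply_to_and _ _ H2.
have q0 : q != 0 by apply: contraTneq qg => ->; rewrite dvd0p.
have sq : (size q < size g)%N.
  rewrite ltn_neqAle dvdp_leq // andbT; apply/negP => /eqP e; apply: nqg.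
  by rewrite -dvdp_size_eqp // e.
have q2 : (1 < size q)%N by rewrite ltn_neqAle eq_sym q1 /= size_poly_gt0.
have [Q [HQ Qq]] := IH q (leq_trans sq hs) q2.
by exists Q; split => //; apply: dvdp_trans Qq qg.
Qed.

Lemma sq_root (L : fieldType) (R : {poly L}) x :
  root R x -> root R^`() x -> ('X - x%:P) ^+ 2 %| R.
Proof.
case/factor_theorem => S ->.
rewrite derivM derivXsubC mulr1 rootE !hornerE subrr mulr0 add0r => Sx.
case/factor_theorem: Sx => S2 ->.
by rewrite -mulrA -expr2 dvdp_mull.
Qed.

Lemma sep_of_distinct (K : fieldType) (P : {poly K}) :
  distinct_roots P -> separable_poly P.
Proof.
move=> dr; rewrite unlock /coprimep.
apply/negP => /negP; rewrite neq_ltn ltnS leqn0 size_poly_eq0 gcdp_eq0.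
case/orP.
  case/andP => /eqP P0 _; have := dr K idfun 0.
  by rewrite P0 map_poly0 dvdp0.
move=> hg.
have [Q [hQ Qg]] := ex_irr_factor hg.
pose L := {poly %/ Q with hQ}.
pose f : {rmorphism K -> L} := qpolyC Q.
pose x : L := in_qpoly Q 'X.
have rQ : forall h, Q %| h -> root (map_poly f h) x.
  move=> h Qh; rewrite rootE /x.
  have E : (map_poly f h).[in_qpoly Q 'X] = in_qpoly Q (h \Po 'X).
    by rewrite in_qpoly_comp_horner.
  rewrite E comp_polyXr; apply/eqP; apply: val_inj => /=.
  rewrite /= (mk_monicE hQ); by have := Qh; rewrite dvdpE => /eqP.
have := dr L f x; rewrite sq_root //.
  by apply: rQ; apply: dvdp_trans Qg (dvdp_gcdl _ _).
by rewrite deriv_map; apply: rQ; apply: dvdp_trans Qg (dvdp_gcdr _ _).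
Qed.
Lemma arith (q : nat) (hq1 : (1 < q)%N) (r s : rat) (m n t : nat)
  (hz : forall n', (m <= n')%N -> exists t' : nat, r + s * q%:R ^+ n' = t'%:R)
  (E : r + s * q%:R ^+ n = t%:R) :
  exists (e : nat -> nat) (c1 c2 : nat), [/\ e 0%N = t,
    forall j, (e j.+1 + c2 = q * e j + c1)%N &
    forall j, (e j)%:R = r + s * q%:R ^+ (n + j)].
Proof.
pose x j := r + s * q%:R ^+ (n + j).
have xS j : x j.+1 = q%:R * x j + r * (1 - q%:R) by rewrite /x addnS exprS; ring.
have [t0 h0] := hz (n + m)%N (leq_addl _ _).
have [t1 h1] := hz (n + m.+1)%N (leq_trans (leqnSn m) (leq_addl _ _)).
pose cz : int := t1%:Z - (q * t0)%:Z.
have hc : r * (1 - q%:R) = cz%:~R.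
  have := xS m; rewrite /x h0 h1 => e.
  rewrite /cz intrB -!pmulrn natrM e; ring.
pose z j := iter j (fun y => q%:Z * y + cz) t%:Z.
have xz j : x j = (z j)%:~R.
  elim: j => [|j IH]; first by rewrite /x addn0 E.
  by rewrite xS IH hc /z iterS [in RHS]intrD intrM.
have q1 : 1 <= (q%:R : rat) by rewrite ler1n ltnW.
have xge j : 0 <= x j.
  have [s0|s0] := lerP 0 s.
    have -> : x j = t%:R + s * (q%:R ^+ (n + j) - q%:R ^+ n) by rewrite /x -E; ring.
    apply: addr_ge0 => //; apply: mulr_ge0 => //; rewrite subr_ge0.
    by apply: ler_weXn2l => //; apply: leq_addr.
  have [t2 h2] := hz (n + (j + m))%N (leq_trans (leq_addl j m) (leq_addl _ _)).
  have -> : x j = t2%:R + s * (q%:R ^+ (n + j) - q%:R ^+ (n + (j + m))).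
    by rewrite -h2 /x; ring.
  apply: addr_ge0 => //; apply: mulr_le0; first exact: ltW.
  rewrite subr_le0; apply: ler_weXn2l => //.
  by rewrite leq_add2l leq_addr.
have zge j : (0 <= z j)%R by rewrite -(ler0z rat) -xz.
have gen : forall c : int, exists c1 c2 : nat, c = c1%:Z - c2%:Z.
  case=> [c|c]; first by exists c, 0%N; rewrite subr0.
  by exists 0%N, c.+1; rewrite NegzE sub0r.
have [c1 [c2 hc12]] := gen cz.
exists (fun j => `|z j|%N), c1, c2; split.
- by rewrite /z /=.
- move=> j; have := zge j; have := zge j.+1.
  rewrite /z iterS -/(z j) hc12 => h1' h0'.
  have e1 := gez0_abs h1'; have e0 := gez0_abs h0'.
  apply/eqP; rewrite -(eqr_nat int) !natrD natrM; apply/eqP.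
  rewrite !natz e1 e0.
  lia.
- move=> j; rewrite -/(x j) xz -{2}(gez0_abs (zge j)) //.
Qed.

Unset Implicit Arguments.
Theorem lemma8p1 (K : fieldType) (p : nat) (a : nat -> K)
  (hp : p \in [pchar K]) (hrec : recurrence_seq a)
  (hsimple : simple_seq a) (hnondeg : nondegenerate_seq a)
  (q : nat) (hq : exists k : nat, q = (p ^ k)%N) (r s : rat) (m : nat)
  (hzero : forall n : nat, (m <= n)%N ->
     exists t : nat, r + s * (q%:R) ^+ n = t%:R /\ a t = 0) :
  forall (n t : nat), r + s * (q%:R) ^+ n = t%:R -> a t = 0.
Proof.
move=> n t Et.
have [P1 [[mon1 ann1 min1] dr]] := hsimple.
have [P2 [[mon2 ann2 min2] nd]] := hnondeg.
have eP : P2 = P1.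
  by apply/eqP; rewrite -eqp_monic //; apply/andP; split; [apply: min2 | apply: min1].
subst P2.
set P := P1.
have sepP : separable_poly P := sep_of_distinct dr.
have P0 : P != 0 := monic_neq0 mon1.
have nr0 : ~~ root P 0.
  apply/negP => r0; have := nd K idfun 0 0; rewrite map_poly_id // => /(_ r0 r0) [].
  by rewrite eqxx.
have cX : coprimep P 'X by have := coprimep_XsubC P 0; rewrite polyC0 subr0 => ->.
have [kk hqk] := hq.
case: kk hqk => [|k] hqk.
  have [t' [E' a0]] := hzero m (leqnn m).
  rewrite hqk expn0 expr1n in E' Et.
  suff -> : t = t' by [].
  by apply/eqP; rewrite -(eqr_nat rat) -Et -E' expr1n.
have hq1 : (1 < q)%N.
  by rewrite hqk -{1}(expn0 p) ltn_exp2l // prime_gt1 // (pcharf_prime hp).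
have hz : forall n', (m <= n')%N -> exists t' : nat, r + s * q%:R ^+ n' = t'%:R.
  by move=> n' h; have [t' [E _]] := hzero n' h; exists t'.
have [e [c1 [c2 [e0 erec ex]]]] := arith hq1 hz Et.
pose d := (size P).-1.
pose l : 'cV[K]_d := \col_(i < d) a i.
have ha_e u : a u = (poly_rV ('X^u %% P) *m l) 0 0.
  by rewrite -Lf_mx ?size_mod_d // -(Lf_mod _ ann1) Lf_Xn.
pose D := Mat P ('X^c2) (p ^ 0)%N.
pose C := Mat P ('X^c1) (p ^ k.+1)%N.
pose w j : 'rV[K]_d := poly_rV ('X^(e j) %% P).
have hD : row_free D := Mat_free 0 hp sepP (coprimep_expr c2 cX).
have hC : row_free C := Mat_free k.+1 hp sepP (coprimep_expr c1 cX).
have hw : forall j, w j.+1 *m D = map_mx (frobk k.+1 hp) (w j) *m C.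
  move=> j; rewrite !mulMat; congr (poly_rV _).
  have S1 : \sum_(i < d) (w j.+1) 0 i *: 'X^((p ^ 0)%N * i) = 'X^(e j.+1) %% P.
    rewrite expn0; under eq_bigr => i _ do rewrite mul1n.
    by rewrite -rVpolyE /w poly_rV_K // size_mod_d.
  have S2 : \sum_(i < d) (map_mx (frobk k.+1 hp) (w j)) 0 i *: 'X^((p ^ k.+1)%N * i)
      = ('X^(e j) %% P) ^+ (p ^ k.+1)%N.
    by rewrite (frob_poly k.+1 hp (size_mod_d _ P0)); apply: eq_bigr => i _; rewrite !mxE.
  rewrite S1 S2 modp_mul -[in RHS]modp_mul modpX modp_mul -exprM -!exprD.
  by rewrite -hqk mulnC addnC erec addnC.
have hl : forall j, (m <= j)%N -> w j *m l = 0.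
  move=> j hj; apply/matrixP => i0 j0; rewrite !ord1 -ha_e mxE.
  have [t' [E' a0]] := hzero (n + j)%N (leq_trans hj (leq_addl _ _)).
  suff -> : e j = t' by [].
  by apply/eqP; rewrite -(eqr_nat rat) ex E'.
have := core hD hC hw hl.
move=> /(congr1 (fun M : 'M[K]_1 => M 0 0)); rewrite -ha_e e0 mxE.
done.
Qed.
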